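(* In the setting below, for every risk model $c$ on the sample, $$1\;\ge\;\mathrm{AUROC}\;\ge\;\max\Big\{\min_{1\le k\le M}B_k(\mathrm{AUNBC};a_0),\,0\Big\},$$ where for $k=1,\dots,M$ the function $B_k(\cdot;a_0)$, defined for $y\in[a_0p_1-(1-a_0)P_M,\;a_0]$, is $$B_k(y;a_0)=\begin{cases}1-\frac{a_0-y-(1-a_0)P_k}{a_0(1-p_k)}, & \text{if } y\le a_0-2(1-a_0)P_k,\\[2pt] 1-\frac{(a_0-y)^2}{4P_k(1-p_k)a_0(1-a_0)}, & \text{otherwise}.\end{cases}$$
   Context: Let $0=p_0<p_1<\cdots<p_M<p_{M+1}=1$ with $M\ge1$, and let a labelled sample $\{(\bm x_j,y_j)\}_{j=1}^N$, $y_j\in\{0,1\}$, contain $N^+\ge1$ positive and $N^-\ge1$ negative samples; $a_0=N^+/N$. For $k=1,\dots,M$, $P_k=\sum_{i=1}^k\frac{(p_{i+1}-p_i)p_i}{1-p_i}$. A risk model is any function $c$ assigning to each sample a value $c(\bm x_j)\in[0,1]$. For $i=0,\dots,M$, $\mathrm{TP}_i=\#\{j:c(\bm x_j)\ge p_i,\ y_j=1\}$, $\mathrm{FP}_i=\#\{j:c(\bm x_j)\ge p_i,\ y_j=0\}$, and $\mathrm{TP}_{M+1}=\mathrm{FP}_{M+1}=0$. $\mathrm{AUROC}=\frac{1}{N^+N^-}\sum_{i=0}^M(\mathrm{FP}_i-\mathrm{FP}_{i+1})\mathrm{TP}_i$ and $\mathrm{AUNBC}=\frac1N\sum_{i=0}^M(p_{i+1}-p_i)\big(\mathrm{TP}_i-\mathrm{FP}_i\frac{p_i}{1-p_i}\big)$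 (one has $a_0p_1-(1-a_0)P_M\le\mathrm{AUNBC}\le a_0$). *)

(* Defs.v *)
From HB Require Import structures.
From mathcomp Require Import all_boot all_order all_algebra.
Set Implicit Arguments. Unset Strict Implicit. Unset Printing Implicit Defensive.
Import Order.TTheory GRing.Theory Num.Theory.
Local Open Scope ring_scope.

Section Defs.
Variable R : realFieldType.
Variables (N : nat) (X : Type).
Variables (x : 'I_N -> X) (lab : 'I_N -> bool) (c : X -> R).
Variables (M : nat) (p : nat -> R).

Definition Npos : nat := #|[set j : 'I_N | lab j]|.
Definition Nneg : nat := #|[set j : 'I_N | ~~ lab j]|.

Definition a0 : R := (Npos)%:R / N%:R.

Definition TP (i : nat) : nat :=
  if (i <= M)%N then #|[set j : 'I_N | (p i <= c (x j)) && lab j]| else 0%N.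
Definition FP (i : nat) : nat :=
  if (i <= M)%N then #|[set j : 'I_N | (p i <= c (x j)) && ~~ lab j]| else 0%N.

Definition AUROC : R :=
  (Npos%:R * Nneg%:R)^-1 *
  \sum_(0 <= i < M.+1) ((FP i)%:R - (FP i.+1)%:R) * (TP i)%:R.

Definition AUNBC : R :=
  N%:R^-1 *
  \sum_(0 <= i < M.+1)
     (p i.+1 - p i) * ((TP i)%:R - (FP i)%:R * (p i / (1 - p i))).

Definition Pk (k : nat) : R :=
  \sum_(1 <= i < k.+1) (p i.+1 - p i) * p i / (1 - p i).

Definition Bk (k : nat) (y a : R) : R :=
  if y <= a - 2 * (1 - a) * Pk k
  then 1 - (a - y - (1 - a) * Pk k) / (a * (1 - p k))
  else 1 - (a - y) ^+ 2 / (4 * Pk k * (1 - p k) * a * (1 - a)).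

(* min_{1 <= k <= M} B_k(y; a)  (big min seeded with B_1, min is idempotent) *)
Definition minB (y a : R) : R :=
  \big[Num.min/Bk 1 y a]_(1 <= k < M.+1) Bk k y a.

End Defs.
Arguments a0 {R N} lab.

(* Main.v *)
Require Import Defs.
From HB Require Import structures.
From mathcomp Require Import all_boot all_order all_algebra.
From mathcomp Require Import zify ring lra.
Import Order.TTheory GRing.Theory Num.Theory.
Local Open Scope ring_scope.

Section Core.
Variable R : realFieldType.

Lemma argmax (g : nat -> R) n : (1 <= n)%N ->
  exists k, (1 <= k <= n)%N /\ forall m, (1 <= m <= n)%N -> g m <= g k.
Proof.
elim: n => [//|n IH] _.
have [n0|n0] := posnP n.
  by exists 1%N; split => // m Hm; have -> : m = 1%N by lia.
have [k [Hk Hm]] := IH n0.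
have [le|le] := leP (g k) (g n.+1).
  exists n.+1; split; first lia.
  move=> m Hm'; have [mn|mn] := leqP m n; first by apply: le_trans le; apply: Hm; lia.
  by have -> : m = n.+1 by lia.
exists k; split; first lia.
move=> m Hm'; have [mn|mn] := leqP m n; first by apply: Hm; lia.
have -> : m = n.+1 by lia.
exact: ltW.
Qed.

Lemma bigmin_le_gen (F : nat -> R) x0 n : forall d m k, (n - m)%N = d -> (m <= k < n)%N ->
  \big[Num.min/x0]_(m <= i < n) F i <= F k.
Proof.
elim=> [|d IH] m k Hd Hk; first lia.
have mn : (m < n)%N by lia.
rewrite (big_ltn mn) ge_min.
have [km|km] := eqVneq k m; first by rewrite km lexx.
by rewrite (IH m.+1) ?orbT //; lia.
Qed.

Lemma bigmin_le (F : nat -> R) x0 n k : (1 <= k <= n)%N ->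
  \big[Num.min/x0]_(1 <= i < n.+1) F i <= F k.
Proof. by move=> Hk; apply: (@bigmin_le_gen F x0 n.+1 (n.+1 - 1)%N 1%N k (erefl _)); lia. Qed.

Lemma abel (h a : nat -> R) (M : nat) : forall k n, (M.+1 - n)%N = k ->
  (n <= M.+1)%N -> (forall i, (n <= i)%N -> (i < M)%N -> a i <= a i.+1) ->
  (forall m, (n <= m <= M)%N -> 0 <= \sum_(m <= j < M.+1) h j) ->
  a n * \sum_(n <= j < M.+1) h j <= \sum_(n <= j < M.+1) h j * a j.
Proof.
elim=> [|k IH] n Hk Hn Ha Hh.
  by rewrite !big_geq ?mulr0 //; lia.
have ltn : (n < M.+1)%N by lia.
rewrite !(big_ltn ltn).
have key : a n * \sum_(n.+1 <= j < M.+1) h j <= \sum_(n.+1 <= j < M.+1) h j * a j.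
  have [nM|nM] := ltnP n M.
    have H1 : a n * \sum_(n.+1 <= j < M.+1) h j <= a n.+1 * \sum_(n.+1 <= j < M.+1) h j.
      by apply: ler_wpM2r; [apply: Hh; lia | apply: Ha].
    apply: le_trans H1 _; apply: IH; first lia; first lia.
      by move=> i ? ?; apply: Ha => //; lia.
    by move=> m ?; apply: Hh; lia.
  by rewrite !big_geq ?mulr0 //; lia.
rewrite mulrDr; lra.
Qed.

Lemma final_alg (Np Nn pk P c X Q y a : R) : a = Np / (Np + Nn) -> 0 < Np -> 0 < Nn -> 0 < 1 - pk -> 0 < P ->
  0 <= c -> c <= Nn -> P * c <= Q ->
  X <= c / (1 - pk) * ((Np + Nn) * (a - y) - Q) ->
  (if y <= a - 2 * (1 - a) * P
   then 1 - (a - y - (1 - a) * P) / (a * (1 - pk))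
   else 1 - (a - y) ^+ 2 / (4 * P * (1 - pk) * a * (1 - a))) <= 1 - X / (Np * Nn).
Proof.
move=> Ha Np0 Nn0 A0 P0 c0 cN PcQ HX.
set A := 1 - pk in A0 HX *.
set N := Np + Nn in HX Ha.
have N0 : 0 < N by rewrite /N; lra.
set D := a - y.
have H1a : 1 - a = Nn / N by rewrite Ha /N; field; lra.
have ND : N * D = N * a - N * y by rewrite /D; ring.
have Na : N * a = Np by rewrite Ha; field; lra.
have XA : X * A <= c * (N * D - Q).
  have -> : c * (N * D - Q) = c / A * (N * D - Q) * A by field; lra.
  by apply: ler_wpM2r; [lra | rewrite /D; exact: HX].
have XA2 : X * A <= c * (N * D - P * c) by nra.
have NpNn0 : 0 < Np * Nn by exact: mulr_gt0.
case: ifP => Hy.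
- have HD : 2 * Nn * P <= N * D.
    have : 2 * (1 - a) * P <= D by rewrite /D; lra.
    rewrite H1a => h.
    have -> : 2 * Nn * P = N * (2 * (Nn / N) * P) by field; lra.
    by apply: ler_wpM2l; lra.
  suff : X / (Np * Nn) <= (D - (1 - a) * P) / (a * A) by lra.
  have -> : (D - (1 - a) * P) / (a * A) = Nn * (N * D - Nn * P) / A / (Np * Nn).
    rewrite /D H1a Ha; field; lra.
  rewrite ler_pM2r ?invr_gt0 // ler_pdivlMr //.
  have h1 : 0 <= N * D - P * (Nn + c) by nra.
  have h2 : 0 <= (Nn - c) * (N * D - P * (Nn + c)) by apply: mulr_ge0; lra.
  nra.
- suff : X / (Np * Nn) <= D ^+ 2 / (4 * P * A * a * (1 - a)) by lra.
  have -> : D ^+ 2 / (4 * P * A * a * (1 - a)) = (N * D) ^+ 2 / (4 * P * A) / (Np * Nn).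
    rewrite /D H1a Ha; field; lra.
  rewrite ler_pM2r ?invr_gt0 // ler_pdivlMr; last by nra.
  have : 0 <= (N * D - 2 * P * c) ^+ 2 by exact: sqr_ge0.
  nra.
Qed.

Lemma sum_nat_ge0 (F : nat -> R) m n :
  (forall i, (m <= i < n)%N -> 0 <= F i) -> 0 <= \sum_(m <= i < n) F i.
Proof.
move=> H; have := ler_sum_nat (F := fun=> 0) H.
by rewrite big1_eq.
Qed.

Lemma tele_down (f : nat -> R) m n : (m <= n)%N ->
  \sum_(m <= j < n) (f j - f j.+1) = f m - f n.
Proof.
move=> mn.
have -> : \sum_(m <= j < n) (f j - f j.+1) = - \sum_(m <= j < n) (f j.+1 - f j).
  by rewrite -sumrN; apply: eq_bigr => i _; rewrite opprB.
by rewrite telescope_sumr // opprB.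
Qed.

Lemma core (M : nat) (p t f : nat -> R) (Np Nn Nr : R) :
  (1 <= M)%N -> p 0%N = 0 -> p M.+1 = 1 ->
  (forall i : nat, (i <= M)%N -> p i < p i.+1) ->
  0 < Np -> 0 < Nn -> Nr = Np + Nn ->
  t 0%N = Np -> f 0%N = Nn -> f M.+1 = 0 ->
  (forall i, (i < M)%N -> t i.+1 <= t i) ->
  (forall i, (i <= M)%N -> f i.+1 <= f i) ->
  (forall i, 0 <= t i <= Np) -> (forall i, 0 <= f i) ->
  let auroc := (Np * Nn)^-1 * \sum_(0 <= i < M.+1) (f i - f i.+1) * t i in
  let y := Nr^-1 * \sum_(0 <= i < M.+1)
     (p i.+1 - p i) * (t i - f i * (p i / (1 - p i))) in
  auroc <= 1 /\ 0 <= auroc /\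
  exists k, (1 <= k <= M)%N /\ Bk p k y (Np / Nr) <= auroc.
Proof.
move=> M1 p0 pM pinc Np0 Nn0 HN t0 f0 fM tdec fdec tb fb auroc y.
have pmono : forall i j, (i <= j <= M.+1)%N -> p i <= p j.
  move=> i; elim=> [|j IH] Hij; first by have -> : i = 0%N by lia.
  have [ij|ij] := eqVneq i j.+1; first by rewrite ij.
  by apply: le_trans (IH _) (ltW (pinc _ _)); lia.
have fmono : forall i j, (i <= j <= M.+1)%N -> f j <= f i.
  move=> i; elim=> [|j IH] Hij; first by have -> : i = 0%N by lia.
  have [ij|ij] := eqVneq i j.+1; first by rewrite ij.
  by apply: le_trans (fdec _ _) (IH _); lia.
have tmono : forall i j, (i <= j <= M)%N -> t j <= t i.
  move=> i; elim=> [|j IH] Hij; first by have -> : i = 0%N by lia.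
  have [ij|ij] := eqVneq i j.+1; first by rewrite ij.
  by apply: le_trans (tdec _ _) (IH _); lia.
have pge0 : forall i, (i <= M.+1)%N -> 0 <= p i.
  by move=> i Hi; rewrite -p0; apply: pmono; lia.
have p1 : forall i, (i <= M)%N -> 0 < 1 - p i.
  move=> i Hi; rewrite -pM subr_gt0; apply: le_lt_trans (pinc M (leqnn _)).
  by apply: pmono; lia.
have dge0 : forall i, (i <= M)%N -> 0 <= p i.+1 - p i.
  by move=> i Hi; rewrite subr_ge0; apply: ltW; apply: pinc.
have wge0 : forall i, (i <= M)%N -> 0 <= p i / (1 - p i).
  by move=> i Hi; apply: divr_ge0; [apply: pge0; lia | apply: ltW; apply: p1].

subst Nr.
set X' := \sum_(1 <= i < M.+1) (f i - f i.+1) * (Np - t i).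
have Eq1 : \sum_(0 <= i < M.+1) (f i - f i.+1) * t i = Np * Nn - X'.
  have sume : \sum_(0 <= i < M.+1) (f i - f i.+1) = Nn by rewrite tele_down // f0 fM subr0.
  have E0 : \sum_(0 <= i < M.+1) (f i - f i.+1) * (Np - t i) = X'.
    by rewrite big_ltn // t0 subrr mulr0 add0r.
  rewrite -E0 -sume mulr_sumr -sumrB; apply: eq_bigr => i _; ring.
set S := \sum_(1 <= i < M.+1) (p i.+1 - p i) * (Np - t i).
set Q := \sum_(1 <= i < M.+1) (p i.+1 - p i) * (p i / (1 - p i)) * f i.
have Eq2 : (Np + Nn) * (Np / (Np + Nn) - y) = S + Q.
  have sumd : \sum_(0 <= i < M.+1) (p i.+1 - p i) = 1 by rewrite telescope_sumr // p0 pM subr0.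
  have -> : (Np + Nn) * (Np / (Np + Nn) - y) = Np - \sum_(0 <= i < M.+1)
     (p i.+1 - p i) * (t i - f i * (p i / (1 - p i))).
    rewrite /y; field; lra.
  have E0 : \sum_(0 <= i < M.+1) ((p i.+1 - p i) * (Np - t i) +
      (p i.+1 - p i) * (p i / (1 - p i)) * f i) = S + Q.
    by rewrite big_ltn // t0 p0 subrr !mul0r ?mulr0 ?mul0r !add0r ?addr0 big_split /=.
  rewrite -E0 -{1}(mulr1 Np) -sumd mulr_sumr -sumrB; apply: eq_bigr => i _; ring.
have QP : forall m, (1 <= m <= M)%N -> Pk p m * f m <= Q.
  move=> m Hm; rewrite /Q (big_cat_nat _ (n:=m.+1)) /=; [|lia|lia].
  apply: le_trans (_ : _ <= \sum_(1 <= i < m.+1) (p i.+1 - p i) * (p i / (1 - p i)) * f i) _.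
    rewrite /Pk mulr_suml; apply: ler_sum_nat => i Hi.
    rewrite -[_ * p i / _]mulrA; apply: ler_wpM2l; first by apply: mulr_ge0; [apply: dge0 | apply: wge0]; lia.
    by apply: fmono; lia.
  rewrite lerDl; apply: sum_nat_ge0 => i Hi.
  by apply: mulr_ge0; [apply: mulr_ge0; [apply: dge0 | apply: wge0]; lia | apply: fb].
have Pkpos : forall m, (1 <= m <= M)%N -> 0 < Pk p m.
  move=> m Hm; rewrite /Pk big_ltn; last by lia.
  have h1 : 0 < (p 2 - p 1) * p 1 / (1 - p 1).
    apply: divr_gt0; last by apply: p1; lia.
    apply: mulr_gt0; first by rewrite subr_gt0; apply: pinc; lia.
    by rewrite -p0; apply: pinc.
  have h2 : 0 <= \sum_(2 <= i < m.+1) (p i.+1 - p i) * p i / (1 - p i).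
    apply: sum_nat_ge0 => i Hi; rewrite -mulrA.
    by apply: mulr_ge0; [apply: dge0 | apply: wge0]; lia.
  lra.

pose c m := Num.min Nn (Q / Pk p m).
have fc : forall m, (1 <= m <= M)%N -> f m <= c m.
  move=> m Hm; rewrite /c le_min; apply/andP; split.
    by rewrite -f0; apply: fmono; lia.
  by rewrite ler_pdivlMr ?Pkpos // mulrC; apply: QP.
have cge0 : forall m, (1 <= m <= M)%N -> 0 <= c m.
  by move=> m Hm; apply: le_trans (fc m Hm); apply: fb.
have cle : forall m, c m <= Nn by move=> m; rewrite /c ge_min lexx.
pose g m := c m / (1 - p m).
have [k [Hk kmax]] := @argmax g M M1.
pose lam := g k.
have tail : forall m, (1 <= m <= M)%N ->
    0 <= \sum_(m <= j < M.+1) (lam * (p j.+1 - p j) - (f j - f j.+1)).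
  move=> m Hm; rewrite sumrB -mulr_sumr telescope_sumr; last by lia.
  rewrite tele_down; last by lia.
  rewrite pM fM subr0 subr_ge0.
  apply: le_trans (fc m Hm) _.
  have -> : c m = g m * (1 - p m) by rewrite /g divfK //; apply: lt0r_neq0; apply: p1; lia.
  apply: ler_wpM2r; first by apply: ltW; apply: p1; lia.
  exact: kmax.
have ab := @abel (fun j => lam * (p j.+1 - p j) - (f j - f j.+1)) (fun j => Np - t j)
   M (M.+1 - 1)%N 1%N (erefl _) (leq_trans M1 (leqnSn _)).
have XS : X' <= lam * S.
  have h0 : 0 <= (Np - t 1%N) * \sum_(1 <= j < M.+1) (lam * (p j.+1 - p j) - (f j - f j.+1)).
    apply: mulr_ge0; first by have := tb 1%N; lra.
    by apply: tail; lia.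
  have ha1 : forall i, (1 <= i)%N -> (i < M)%N -> Np - t i <= Np - t i.+1.
    by move=> i Hi HiM; have := tdec i HiM; lra.
  have ha2 : forall m, (1 <= m <= M)%N ->
      0 <= \sum_(m <= j < M.+1) (lam * (p j.+1 - p j) - (f j - f j.+1)).
    by move=> m Hm; apply: tail; lia.
  have h1 := le_trans h0 (ab ha1 ha2).
  have h2 : \sum_(1 <= j < M.+1) (lam * (p j.+1 - p j) - (f j - f j.+1)) * (Np - t j) = lam * S - X'.
    rewrite /S /X' mulr_sumr -sumrB; apply: eq_bigr => i _; ring.
  rewrite h2 in h1; lra.
have X'0 : 0 <= X'.
  apply: sum_nat_ge0 => i Hi; apply: mulr_ge0.
    by rewrite subr_ge0; apply: fdec; lia.
  by have := tb i; lra.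
have NpNn0 : 0 < Np * Nn by apply: mulr_gt0.
have aurocE : auroc = 1 - X' / (Np * Nn) by rewrite /auroc Eq1; field; lra.
split; first by rewrite aurocE; have := divr_ge0 X'0 (ltW NpNn0); lra.
split.
  apply: mulr_ge0; first by rewrite invr_ge0; apply: ltW.
  apply: sum_nat_ge0 => i Hi; apply: mulr_ge0; last by have := tb i; lra.
  by rewrite subr_ge0; apply: fdec; lia.
exists k; split => //.
rewrite aurocE /Bk.
apply: (@final_alg Np Nn (p k) (Pk p k) (c k) X' Q y) => //.
- by apply: p1; lia.
- exact: Pkpos.
- exact: cge0.
- rewrite mulrC -ler_pdivlMr; last by apply: Pkpos.
  by rewrite /c ge_min lexx orbT.
- by rewrite Eq2 addrK; exact: XS.
Qed.
End Core.

Theorem corollary1 (R : realFieldType) (M : nat) (p : nat -> R)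
  (N : nat) (X : Type) (x : 'I_N -> X) (lab : 'I_N -> bool) (c : X -> R) :
  (1 <= M)%N ->
  p 0%N = 0 -> p M.+1 = 1 ->
  (forall i : nat, (i <= M)%N -> p i < p i.+1) ->
  (1 <= Npos lab)%N -> (1 <= Nneg lab)%N ->
  (forall j : 'I_N, 0 <= c (x j) <= 1) ->
  1 >= AUROC x lab c M p /\
  AUROC x lab c M p >=
    Num.max (minB M p (AUNBC x lab c M p) (a0 lab)) 0.
Proof.
move=> M1 p0 pM pinc Hp Hn cb.
have HNN : (Npos lab + Nneg lab)%N = N.
  rewrite /Npos /Nneg.
  have -> : [set j : 'I_N | ~~ lab j] = ~: [set j | lab j].
    by apply/setP => j; rewrite !inE.
  by rewrite cardsC card_ord.
have sub : forall i j b, (i <= j <= M)%N ->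
    leq #|[set k : 'I_N | (p j <= c (x k)) && (if b then lab k else ~~ lab k)]|
     #|[set k : 'I_N | (p i <= c (x k)) && (if b then lab k else ~~ lab k)]|.
  move=> i j b Hij; apply: subset_leq_card; apply/subsetP => k; rewrite !inE.
  case/andP => h ->; rewrite andbT; apply: le_trans h.
  move: Hij; move/andP => [Hij HjM].
  elim: j Hij HjM => [|j IH] Hij HjM; first by have -> : i = 0%N by lia.
  have [ij|ij] := eqVneq i j.+1; first by rewrite ij.
  by apply: le_trans (IH _ _) (ltW (pinc _ _)); lia.
have TPle : forall i, (TP x lab c M p i <= Npos lab)%N.
  move=> i; rewrite /TP; case: ifP => // HiM.
  by apply: subset_leq_card; apply/subsetP => k; rewrite !inE => /andP[].
have := @core R M p (fun i => (TP x lab c M p i)%:R) (fun i => (FP x lab c M p i)%:R)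
  (Npos lab)%:R (Nneg lab)%:R N%:R M1 p0 pM pinc.
case.
- by rewrite ltr0n.
- by rewrite ltr0n.
- by rewrite -natrD HNN.
- rewrite /TP leq0n; congr (_ %:R); apply: eq_card => k; rewrite !inE.
  by have := cb k; rewrite p0 => /andP[-> _].
- rewrite /FP leq0n; congr (_ %:R); apply: eq_card => k; rewrite !inE.
  by have := cb k; rewrite p0 => /andP[-> _].
- by rewrite /FP ltnn.
- move=> i HiM; rewrite ler_nat /TP HiM (ltnW HiM).
  by have := sub i i.+1 true; apply; lia.
- move=> i HiM; rewrite ler_nat /FP HiM.
  case: ifP => // HiM'; have := sub i i.+1 false; apply; lia.
- by move=> i; rewrite ler0n ler_nat TPle.
- by move=> i; rewrite ler0n.
- move=> H1 [H0 [k [Hk HB]]]; split => //.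
  rewrite ge_max H0 andbT.
  apply: le_trans HB; exact: bigmin_le.
Qed.
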